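(* Let $T$ be an ergodic measure-preserving transformation of a Lebesgue probability space $(X,\mathcal B,\mu)$ and let $g\in L^\infty(X,\mu)$. The following are equivalent: (i) $g$ is cohomologous to a constant in $L^\infty$; (ii) there is a constant $C$ such that for $\mu$-a.e. $x$ one has $R^g_{x,l}\le C$ for all integers $l\ge1$; (iii) there is a constant $C$ such that for $\mu$-a.e. $x$ there exists a sequence of positive integers $l_n=l_n(x)\to\infty$ with $R^g_{x,l_n}\le C$ for all $n$.
   Context: For $x\in X$ and an integer $j\ge0$ put $S^g_x(j)=\sum_{k=0}^{j-1}g(T^kx)$, and let $F^g_x:[0,\infty)\to\mathbb R$ be the function that agrees with $S^g_x$ at nonnegative integers and is linear on each interval $[j,j+1]$. For a positive integer $l$ put $R^g_{x,l}=\max_{t\in[0,1]}|F^g_x(tl)-tF^g_x(l)|$. A function $g\in L^\infty(X,\mu)$ is cohomologous to a constant in $L^\infty$ if there are $c\in\mathbb R$ and $h\in L^\infty(X,\mu)$ with $g=c+h\circ T-h$ $\mu$-a.e. *)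

(* Defs.v *)
From HB Require Import structures.
From mathcomp Require Import all_boot all_order all_algebra.
From mathcomp Require Import all_classical all_reals all_analysis.
Set Implicit Arguments. Unset Strict Implicit. Unset Printing Implicit Defensive.
Import Order.TTheory GRing.Theory Num.Theory.
Local Open Scope classical_set_scope.
Local Open Scope ring_scope.

Section Defs.
Context {R : realType} {d : measure_display} {X : measurableType d}.

(* Standard Borel space: Borel isomorphic to a Borel subset of the real line.
   A probability measure on such a space is (up to completion) a Lebesgue
   probability space. *)
Definition standard_borel : Prop :=
  exists (f : X -> R), measurable_fun setT f /\ set_inj setT f /\
    measurable (f @` setT) /\ (forall A : set X, measurable A -> measurable (f @` A)).

Definition measure_preserving (mu : {measure set X -> \bar R}) (T : X -> X) :=
  measurable_fun setT T /\
  forall A : set X, measurable A -> mu (T @^-1` A) = mu A.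

Definition ergodic (mu : {measure set X -> \bar R}) (T : X -> X) :=
  forall A : set X, measurable A -> T @^-1` A = A ->
    mu A = 0%E \/ mu A = 1%E.

Definition Linfty (mu : {measure set X -> \bar R}) (f : X -> R) :=
  measurable_fun setT f /\ exists M : R, {ae mu, forall x, `|f x| <= M}.

Definition birkhoff_sum (T : X -> X) (g : X -> R) (x : X) (j : nat) : R :=
  \sum_(k < j) g (iter k T x).

Definition interp_sum (T : X -> X) (g : X -> R) (x : X) (s : R) : R :=
  let n := `|Num.floor s|%N in
  birkhoff_sum T g x n + (s - n%:R) * g (iter n T x).

(* R^g_{x,l} = max_{t in [0,1]} |F(t l) - t F(l)|  (max = sup, continuity) *)
Definition Rdev (T : X -> X) (g : X -> R) (x : X) (l : nat) : R :=
  sup [set `|interp_sum T g x (t * l%:R) - t * interp_sum T g x l%:R|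
       | t in `[0, 1]%classic].

Definition cohomologous_to_const (mu : {measure set X -> \bar R}) (T : X -> X)
  (g : X -> R) :=
  exists (c : R) (h : X -> R), Linfty mu h /\
    {ae mu, forall x, g x = c + h (T x) - h x}.

End Defs.

(* Main.v *)
Require Import Defs.
From HB Require Import structures.
From mathcomp Require Import all_boot all_order all_algebra.
From mathcomp Require Import all_classical all_reals all_analysis.
From mathcomp Require Import lra measurable_realfun.
Import Order.TTheory GRing.Theory Num.Theory.
Local Open Scope classical_set_scope.
Local Open Scope ring_scope.

Section Det.
Context {R : realType} {d : measure_display} {X : measurableType d}.
Variables (T : X -> X) (g : X -> R).

Local Notation S := (birkhoff_sum T g).

Lemma bs0 x : S x 0 = 0.
Proof. by rewrite /birkhoff_sum big_ord0. Qed.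

Lemma bsS x j : S x j.+1 = S x j + g (iter j T x).
Proof. by rewrite /birkhoff_sum big_ord_recr. Qed.

Lemma bsSl x j : S x j.+1 = g x + S (T x) j.
Proof.
rewrite /birkhoff_sum big_ord_recl /=; congr (_ + _).
by apply: eq_bigr => i _; rewrite add0n -iterS iterSr.
Qed.

Lemma interp_nat x (j : nat) : interp_sum T g x j%:R = S x j.
Proof.
rewrite /interp_sum.
have -> : Num.floor (j%:R : R) = j%:Z by rewrite (_ : (j%:R : R) = (j%:Z)%:~R) // intrKfloor.
by rewrite /= subrr mul0r addr0.
Qed.

Lemma floor_props (s : R) : 0 <= s ->
  let n := `|Num.floor s|%N in n%:R <= s /\ s < n%:R + 1.
Proof.
move=> s0 n.
have fz : 0 <= Num.floor s by rewrite Num.Theory.floor_ge0.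
have e : (n%:R : R) = (Num.floor s)%:~R.
  by rewrite /n -[in RHS](gez0_abs fz) pmulrn.
rewrite e; split; first exact: Num.Theory.floor_le.
have := Num.Theory.floorD1_gt s; by rewrite intrD.
Qed.

End Det.

Lemma psum_mono {R : realType} (F : nat -> R) n m : (forall k, 0 <= F k) -> (n <= m)%N ->
  \sum_(k < n) F k <= \sum_(k < m) F k.
Proof.
move=> F0 nm; rewrite -(subnKC nm); elim: (m - n)%N => [|p IH]; first by rewrite addn0.
by rewrite addnS big_ord_recr /=; apply: le_trans IH _; rewrite lerDl.
Qed.

Section Det2.
Context {R : realType} {d : measure_display} {X : measurableType d}.
Variables (T : X -> X) (g : X -> R).
Local Notation S := (birkhoff_sum T g).

Lemma interp_bound x (l : nat) s : 0 <= s -> s <= l%:R ->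
  `|interp_sum T g x s| <= \sum_(k < l.+1) `|g (iter k T x)|.
Proof.
move=> s0 sl; have [h1 h2] := @floor_props R s s0.
rewrite /interp_sum; set n := `|Num.floor s|%N in h1 h2 *.
have nl : (n <= l)%N by rewrite -(ler_nat R); apply: le_trans h1 sl.
apply: le_trans (ler_normD _ _) _.
apply: le_trans (@psum_mono R (fun k => `|g (iter k T x)|) n.+1 l.+1 (fun k => normr_ge0 _) nl).
rewrite big_ord_recr /=; apply: lerD; first exact: ler_norm_sum.
rewrite normrM; apply: ler_piMl => //; rewrite ger0_norm ?subr_ge0 //; lra.
Qed.

Definition Rset x (l : nat) := [set `|interp_sum T g x (t * l%:R) - t * interp_sum T g x l%:R|
       | t in `[0, 1]%classic].

Lemma Rset_ub x l : has_ubound (Rset x l).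
Proof.
exists (2 * \sum_(k < l.+1) `|g (iter k T x)|) => _ [t /= t01 <-].
move: t01; rewrite in_itv /= => /andP[t0 t1].
have l0 : (0 : R) <= l%:R by [].
apply: le_trans (ler_normB _ _) _; rewrite mulr2n mulrDl mul1r; apply: lerD.
  apply: interp_bound; first exact: mulr_ge0.
  by rewrite -[leRHS]mul1r ler_wpM2r.
rewrite normrM ger0_norm //; apply: le_trans (ler_piMl (normr_ge0 _) t1) _.
exact: interp_bound.
Qed.

Lemma Rdev_ge x (l j : nat) : (1 <= l)%N -> (j <= l)%N ->
  `|S x j - (j%:R / l%:R) * S x l| <= Rdev T g x l.
Proof.
move=> l1 jl; apply: (ub_le_sup (Rset_ub x l)).
exists (j%:R / l%:R) => /=.
  rewrite in_itv /= divr_ge0 //= ler_pdivrMr ?ltr0n // mul1r ler_nat //.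
rewrite mulfVK ?pnatr_eq0 -?lt0n // !interp_nat //.
Qed.

Lemma Rdev_le x l (B : R) :
  (forall t : R, 0 <= t <= 1 ->
    `|interp_sum T g x (t * l%:R) - t * interp_sum T g x l%:R| <= B) ->
  Rdev T g x l <= B.
Proof.
move=> HB; apply: ge_sup.
  by exists `|interp_sum T g x (0 * l%:R) - 0 * interp_sum T g x l%:R|, 0 => //=;
    rewrite in_itv /= lexx ler01.
by move=> _ [t /= t01 <-]; apply: HB; move: t01; rewrite in_itv.
Qed.

End Det2.

Section Det3.
Context {R : realType} {d : measure_display} {X : measurableType d}.
Variables (T : X -> X) (g : X -> R).
Local Notation S := (birkhoff_sum T g).

Lemma cob_Rdev x (c : R) (h : X -> R) (K : R) :
  (forall k, g (iter k T x) = c + h (iter k.+1 T x) - h (iter k T x)) ->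
  (forall k, `|h (iter k T x)| <= K) -> forall l, Rdev T g x l <= 4 * K.
Proof.
move=> hg hK l.
have Sn n : S x n = n%:R * c + h (iter n T x) - h x.
  elim: n => [|n IH]; first by rewrite bs0 mul0r add0r subrr.
  by rewrite bsS IH hg -addn1 natrD; lra.
have Eb (s : R) : 0 <= s -> `|interp_sum T g x s - s * c| <= 2 * K.
  move=> s0; have [h1 h2] := @floor_props R s s0.
  rewrite /interp_sum; set n := `|Num.floor s|%N in h1 h2 *.
  rewrite Sn hg.
  have := hK n; have := hK n.+1; have := hK 0%N.
  move=> /ler_normlP[a1 a2] /ler_normlP[b1 b2] /ler_normlP[c1 c2].
  rewrite ler_norml; apply/andP; split; nra.
apply: Rdev_le => t /andP[t0 t1].
have l0 : (0 : R) <= l%:R by [].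
have := Eb (t * l%:R) (mulr_ge0 t0 l0); have := Eb l%:R l0.
move=> /ler_normlP[a1 a2] /ler_normlP[b1 b2].
rewrite ler_norml; apply/andP; split; nra.
Qed.

End Det3.

Section Det4.
Context {R : realType} {d : measure_display} {X : measurableType d}.
Variables (T : X -> X) (g : X -> R).
Local Notation S := (birkhoff_sum T g).

Lemma lin_const x (C : R) (ln : nat -> nat) :
  (forall n, (0 < ln n)%N) ->
  (forall M : nat, exists N : nat, forall n, (N <= n)%N -> (M <= ln n)%N) ->
  (forall n, Rdev T g x (ln n) <= C) ->
  exists c : R, forall j, `|S x j - j%:R * c| <= C.
Proof.
move=> lpos lbig lC.
pose a n := S x (ln n) / (ln n)%:R.
have key j n : (j <= ln n)%N -> `|S x j - j%:R * a n| <= C.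
  move=> jl; apply: le_trans (lC n); rewrite /a mulrA (mulrC j%:R) -mulrA mulrC.
  exact: Rdev_ge.
pose lo j := (S x j.+1 - C) / j.+1%:R.
pose hi j := (S x j.+1 + C) / j.+1%:R.
have loa j n : (j.+1 <= ln n)%N -> lo j <= a n.
  move=> jl; have /ler_normlP[k1 k2] := key _ _ jl.
  by rewrite /lo ler_pdivrMr ?ltr0n //; lra.
have ahi j n : (j.+1 <= ln n)%N -> a n <= hi j.
  move=> jl; have /ler_normlP[k1 k2] := key _ _ jl.
  by rewrite /hi ler_pdivlMr ?ltr0n //; lra.
have lohi j k : lo j <= hi k.
  have [N HN] := lbig (maxn j.+1 k.+1).
  have := HN N (leqnn N); rewrite geq_max => /andP[h1 h2].
  exact: le_trans (loa _ _ h1) (ahi _ _ h2).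
pose E := [set lo j | j in setT].
have Eub : has_ubound E by exists (hi 0%N) => _ [j _ <-].
have Ene : E !=set0 by exists (lo 0%N), 0%N.
exists (sup E).
have bnd j : `|S x j.+1 - j.+1%:R * sup E| <= C.
  have h1 : lo j <= sup E by apply: (ub_le_sup Eub); exists j.
  have h2 : sup E <= hi j by apply: ge_sup => // _ [k _ <-].
  move: h1 h2; rewrite /lo /hi ler_pdivrMr ?ltr0n // ler_pdivlMr ?ltr0n // => h1 h2.
  by rewrite ler_norml; apply/andP; split; lra.
case=> [|j]; last exact: bnd.
rewrite bs0 mul0r subrr normr0; apply: le_trans (bnd 0%N); exact: normr_ge0.
Qed.

End Det4.

Lemma ubnat {R : realType} (r : R) : exists n : nat, r <= n%:R.
Proof.
exists (Num.bound `|r|); apply: le_trans (ler_norm r) _.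
exact/ltW/archi_boundP.
Qed.

Section Meas.
Context {R : realType} {d : measure_display} {X : measurableType d}.
Variables (mu : {measure set X -> \bar R}) (T : X -> X) (g : X -> R).
Local Notation S := (birkhoff_sum T g).

Lemma mpre (d' : measure_display) (Y : measurableType d') (f : X -> Y) (A : set Y) :
  measurable_fun setT f -> measurable A -> measurable (f @^-1` A).
Proof. by move=> mf mA; rewrite -[_ @^-1` _]setTI; exact: mf. Qed.

Lemma miter k : measurable_fun setT T -> measurable_fun setT (iter k T).
Proof.
move=> mT; elim: k => [|k IH] /=; first exact: measurable_id.
exact: (measurableT_comp mT IH).
Qed.

Lemma mu_iter k A : measure_preserving mu T -> measurable A ->
  mu ((iter k T) @^-1` A) = mu A.
Proof.
move=> [mT hT]; elim: k A => [|k IH] A mA; first by [].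
have -> : iter k.+1 T @^-1` A = iter k T @^-1` (T @^-1` A) by [].
by rewrite IH ?hT //; exact: mpre.
Qed.

Lemma ae_orbit (P : X -> Prop) : measure_preserving mu T ->
  {ae mu, forall x, P x} -> {ae mu, forall x, forall k, P (iter k T x)}.
Proof.
move=> mp hP; apply: ae_foralln => k.
case: hP => N [mN N0 sub]; exists (iter k T @^-1` N); split.
- exact: mpre (miter k mp.1) mN.
- by rewrite mu_iter.
- by move=> x /= nP; apply: sub.
Qed.

Lemma mS j : measurable_fun setT T -> measurable_fun setT g ->
  measurable_fun setT (fun x => S x j).
Proof.
move=> mT mg; elim: j => [|j IH].
  by under eq_fun do rewrite bs0; exact: measurable_cst.
under eq_fun do rewrite bsS.
apply: measurable_funD => //; exact: measurableT_comp mg (miter j mT).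
Qed.

End Meas.

Section Erg.
Context {R : realType} {d : measure_display} {X : measurableType d}.
Variables (T : X -> X) (g : X -> R).
Local Notation S := (birkhoff_sum T g).

Definition Aset (q : R) := [set x | exists B : nat, forall j, S x j - j%:R * q <= B%:R].

Lemma mA q : measurable_fun setT T -> measurable_fun setT g -> measurable (Aset q).
Proof.
move=> mT mg.
have -> : Aset q = \bigcup_(B : nat) \bigcap_(j : nat)
    ((fun x => S x j - j%:R * q) @^-1` `]-oo, B%:R]).
  apply/seteqP; split => x /=.
    by move=> [B HB]; exists B => // j _ /=; rewrite in_itv /= HB.
  by move=> [B _ HB]; exists B => j; have := HB j I; rewrite /= in_itv.
apply: bigcupT_measurable => B; apply: bigcapT_measurable => j.
apply: mpre; last exact: measurable_itv.
exact: (measurable_funB (mS T g j mT mg) (measurable_cst (j%:R * q))).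
Qed.

Lemma A_inv q : T @^-1` Aset q = Aset q.
Proof.
apply/seteqP; split => x /=.
  move=> [B HB]; have [n hn] := ubnat (`|g x - q| + B%:R); exists n => -[|j].
    by rewrite bs0 mul0r subrr.
  have := HB j; have := ler_norm (g x - q).
  rewrite bsSl -addn1 natrD; lra.
move=> [B HB]; have [n hn] := ubnat (`|g x - q| + B%:R); exists n => j.
have := HB j.+1; have := ler_norm (- (g x - q)); rewrite normrN.
rewrite bsSl -addn1 natrD; lra.
Qed.

Lemma A_mono q q' : q <= q' -> Aset q `<=` Aset q'.
Proof.
move=> qq x [B HB]; exists B => j; apply: le_trans (HB j).
by rewrite lerD2l lerN2 ler_wpM2l.
Qed.

Lemma A_mem x (C c q : R) : (forall j, `|S x j - j%:R * c| <= C) ->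
  (Aset q x <-> c <= q).
Proof.
move=> hc; split.
  move=> [B HB]; rewrite leNgt; apply/negP => qc.
  have [n hn] := ubnat ((B%:R + C) / (c - q)).
  move: hn; rewrite ler_pdivrMr ?subr_gt0 // => hn.
  have := HB n.+1; have /ler_normlP[h1 h2] := hc n.+1.
  rewrite -addn1 natrD in h1 h2 *; nra.
move=> cq; have [n hn] := ubnat C; exists n => j.
have /ler_normlP[h1 h2] := hc j.
have : 0 <= (j%:R : R) by [].
nra.
Qed.

End Erg.

Lemma small_inv {R : realType} (e : R) : 0 < e -> exists n : nat, (n.+1%:R)^-1 < e.
Proof.
move=> e0; have [n hn] := ubnat (e^-1); exists n.
rewrite invf_plt ?posrE ?ltr0n //; apply: le_lt_trans hn _; by rewrite ltr_nat.
Qed.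

Section Erg2.
Context {R : realType} {d : measure_display} {X : measurableType d}.
Variables (mu : probability X R) (T : X -> X) (g : X -> R).
Local Notation S := (birkhoff_sum T g).

Lemma erg_const (C : R) : measurable_fun setT T -> measurable_fun setT g -> ergodic mu T ->
  {ae mu, forall x, exists c, forall j, `|S x j - j%:R * c| <= C} ->
  exists c0, {ae mu, forall x, forall j, `|S x j - j%:R * c0| <= C}.
Proof.
move=> mT mg erg hP.
have mAq q := mA T g q mT mg.
have dich q : mu (Aset T g q) = 0%E \/ mu (Aset T g q) = 1%E.
  exact: erg _ (mAq q) (A_inv T g q).
pose P x := exists c, forall j, `|S x j - j%:R * c| <= C.
have hNP : mu.-negligible (~` [set x | P x]) by exact: hP.
have nT : ~ mu.-negligible setT.
  move=> /(measure_negligible measurableT); have := @probability_setT _ _ _ mu.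
  move=> h1 h0; have h2 : (1%E : \bar R) = 0%E by rewrite -h1 -h0.
  by move: h2 => /eqP; rewrite eqe oner_eq0.
have negA q : mu (Aset T g q) = 0%E -> mu.-negligible (Aset T g q).
  by move=> h; apply/negligibleP => //; exact: mAq.
have negCA q : mu (Aset T g q) = 1%E -> mu.-negligible (~` Aset T g q).
  move=> h; apply/negligibleP; first exact: measurableC.
  apply: eq_trans (@probability_setC _ _ _ mu _ (mAq q)) _.
  by rewrite h -EFinB subrr.
have [q1 hq1] : exists q1, mu (Aset T g q1) = 1%E.
  apply: contrapT => H.
  have H0 n : mu (Aset T g n%:R) = 0%E.
    by case: (dich n%:R) => // h; exfalso; apply: H; exists n%:R.
  apply: nT; apply: negligibleS (negligibleU (negligible_bigcup (fun n => negA _ (H0 n))) hNP).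
  move=> x _; have [[c hc]|hx] := pselect (P x); last by right.
  left; have [n hn] := ubnat c; exists n => //; exact: (A_mem T g x C c _ hc).2 hn.
have [q0 hq0] : exists q0, mu (Aset T g q0) = 0%E.
  apply: contrapT => H.
  have H1 n : mu (Aset T g (- n%:R)) = 1%E.
    by case: (dich (- n%:R)) => // h; exfalso; apply: H; exists (- n%:R).
  apply: nT; apply: negligibleS (negligibleU (negligible_bigcup (fun n => negCA _ (H1 n))) hNP).
  move=> x _; have [[c hc]|hx] := pselect (P x); last by right.
  left; have [n hn] := ubnat (1 - c); exists n => //=.
  move/(A_mem T g x C c _ hc); lra.
pose Q0 := [set q | mu (Aset T g q) = 0%E].
have Q0ub : has_ubound Q0.
  exists q1 => q /= hq; rewrite leNgt; apply/negP => lt.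
  have := le_measure mu (mem_set (mAq q1)) (mem_set (mAq q)) (A_mono T g _ _ (ltW lt)).
  move=> hle; have : (mu (Aset T g q1) <= mu (Aset T g q))%E := hle.
  by rewrite hq hq1 lee_fin ler10.
have Q0s : has_sup Q0 by split => //; exists q0.
pose c0 := sup Q0.
have N1 n : mu.-negligible (Aset T g (c0 - (n.+1%:R)^-1)).
  have epos : (0:R) < (n.+1%:R)^-1 by rewrite invr_gt0 ltr0n.
  have [e He lt] := sup_adherent epos Q0s.
  apply: negligibleS (negA _ He); exact: (A_mono T g _ _ (ltW lt)).
have N2 n : mu.-negligible (~` Aset T g (c0 + (n.+1%:R)^-1)).
  apply: negCA; case: (dich (c0 + (n.+1%:R)^-1)) => // h.
  exfalso; have := ub_le_sup (proj2 Q0s) h; rewrite -/c0.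
  by rewrite gerDl leNgt invr_gt0 ltr0n.
exists c0.
apply: negligibleS (negligibleU (negligibleU hNP (negligible_bigcup N1)) (negligible_bigcup N2)).
move=> x /= nQ; have [[c hc]|hx] := pselect (P x); last by left; left.
have [lt|gt|eq] := ltgtP c c0.
- have [n hn] := small_inv (c0 - c) (ltac:(rewrite subr_gt0 //)).
  left; right; exists n => //; apply/(A_mem T g x C c _ hc); move: hn; set ee := (n.+1%:R)^-1; lra.
- have [n hn] := small_inv (c - c0) (ltac:(rewrite subr_gt0 //)).
  right; exists n => //= /(A_mem T g x C c _ hc); move: hn; set ee := (n.+1%:R)^-1; lra.
- by exfalso; apply: nQ; rewrite -eq.
Qed.

End Erg2.

Section Cob.
Context {R : realType} {d : measure_display} {X : measurableType d}.
Variables (mu : {measure set X -> \bar R}) (T : X -> X) (g : X -> R).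
Local Notation S := (birkhoff_sum T g).

Lemma supcob (c0 C : R) : measurable_fun setT T -> measurable_fun setT g -> 0 <= C ->
  {ae mu, forall x, forall j, S x j - j%:R * c0 <= C} ->
  exists h : X -> R, [/\ measurable_fun setT h, (forall x, 0 <= h x <= C) &
    {ae mu, forall x, g x - c0 <= h x - h (T x)}].
Proof.
move=> mT mg C0 hae.
pose u (j : nat) x := Num.min (S x j - j%:R * c0) C.
have uC j x : u j x <= C by rewrite /u ge_min lexx orbT.
have u0 x : u 0%N x = 0 by rewrite /u bs0 mul0r subrr; apply/min_idPl.
have ub x : has_ubound (range (fun j => u j x)).
  by exists C => _ [j _ <-].
have ub' x : has_ubound (sdrop (fun j => u j x) 0).
  by exists C => _ [j _ <-].
have inS x j : sdrop (fun j => u j x) 0 (u j x) by exists j.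
pose h x := sups (fun j => u j x) 0%N.
have hge x j : u j x <= h x by apply: (ub_le_sup (ub' x)); exact: inS.
have hle x (B : R) : (forall j, u j x <= B) -> h x <= B.
  by move=> hB; apply: ge_sup; [exists (u 0%N x); exact: inS| move=> _ [j _ <-]].
exists h; split.
- apply: (measurable_fun_sups (h := fun j x => u j x)).
    by move=> t _; exact: ub.
  move=> j; exact: (measurable_minr (measurable_funB (mS T g j mT mg) (measurable_cst _))
     (measurable_cst C)).
- by move=> x; rewrite -(u0 x) hge /=; exact: hle.
apply: filterS hae => x hx.
suff : h (T x) <= h x - (g x - c0) by lra.
apply: hle => j.
have e : u j.+1 x = S x j.+1 - j.+1%:R * c0 by apply/min_idPl; exact: hx.
apply: le_trans (_ : u j.+1 x - (g x - c0) <= _); last by rewrite lerD2r hge.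
rewrite e bsSl -addn1 natrD /u ge_min; apply/orP; left; lra.
Qed.

End Cob.

Section Int.
Context {R : realType} {d : measure_display} {X : measurableType d}.
Variables (mu : probability X R) (T : X -> X).

Lemma integral_shift (f : X -> R) : measure_preserving mu T -> measurable_fun setT f ->
  (forall x, 0 <= f x) ->
  (\int[mu]_x (f (T x))%:E = \int[mu]_x (f x)%:E)%E.
Proof.
move=> [mT hT] mf f0.
have := ge0_integral_pushforward mT mu (D:=setT) (f := EFin \o f) measurableT
  ((measurable_EFinP _ _).2 mf) (fun y _ => ltac:(rewrite /= lee_fin; exact: f0)).
rewrite preimage_setT => <-.
apply: eq_measure_integral => A mA _.
rewrite /pushforward; first [exact: (hT A mA) | exact: (esym (hT A mA))].
Qed.

End Int.

Section Int2.
Context {R : realType} {d : measure_display} {X : measurableType d}.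
Variables (mu : probability X R) (T : X -> X).

Lemma shift_inv_eq (k : X -> R) (K : R) : measure_preserving mu T -> measurable_fun setT k ->
  (forall x, 0 <= k x <= K) -> {ae mu, forall x, k (T x) <= k x} ->
  {ae mu, forall x, k x = k (T x)}.
Proof.
move=> mp mk kb hle; have mT := mp.1.
pose p x : R := Num.max (k x - k (T x)) 0.
have mkT : measurable_fun setT (fun x => k (T x)) := measurableT_comp mk mT.
have mp' : measurable_fun setT p :=
  measurable_maxr (measurable_funB mk mkT) (measurable_cst (0 : R)).
have p0 x : 0 <= p x by rewrite /p le_max lexx orbT.
have k0 x : 0 <= k x by have /andP[] := kb x.
have eq1 : (\int[mu]_x (k x)%:E = \int[mu]_x (k (T x) + p x)%:E)%E.
  apply: ge0_ae_eq_integral => //.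
  - exact/measurable_EFinP.
  - exact/measurable_EFinP/measurable_funD.
  - by move=> x _; rewrite lee_fin.
  - by move=> x _; rewrite lee_fin addr_ge0.
  apply: filterS hle => x hx _; congr EFin; rewrite /p max_l ?subr_ge0 //; lra.
have eq2 : (\int[mu]_x (k (T x) + p x)%:E =
    \int[mu]_x (k (T x))%:E + \int[mu]_x (p x)%:E)%E.
  under eq_integral do rewrite EFinD.
  apply: ge0_integralD => //.
  - by move=> x _; rewrite lee_fin.
  - exact/measurable_EFinP.
  - by move=> x _; rewrite lee_fin.
  - exact/measurable_EFinP.
have Ib : (0 <= \int[mu]_x (k x)%:E <= K%:E)%E.
  apply/andP; split; first by apply: integral_ge0 => x _; rewrite lee_fin.
  apply: le_trans (_ : (\int[mu]_x (cst K x)%:E <= _)%E).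
    apply: ge0_le_integral => //.
    - by move=> x _; rewrite lee_fin.
    - exact/measurable_EFinP.
    - exact/measurable_EFinP/measurable_cst.
    - by move=> x _; rewrite lee_fin; have /andP[] := kb x.
  have -> : (\int[mu]_x (cst K x)%:E = \int[mu]_x (cst K%:E) x)%E by [].
  rewrite integral_cst //.
  have h1 := @probability_setT _ _ _ mu.
  have e : (K%:E * mu setT = K%:E * 1)%E by congr (mule _ _); exact: h1.
  by rewrite e mule1.
have Ip : (\int[mu]_x (p x)%:E = 0)%E.
  move: eq1; rewrite eq2 integral_shift //.
  have fI : (\int[mu]_x (k x)%:E)%E \is a fin_num.
    by rewrite ge0_fin_numE ?(andP Ib).1 // (le_lt_trans (andP Ib).2) // ltry.
  move=> h; have := congr1 (fun y => y - \int[mu]_x (k x)%:E)%E h.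
  by rewrite subee // addeAC subee // add0e => <-.
have : ae_eq mu setT (EFin \o p) (cst 0%E).
  apply/ae_eq_integral_abs => //; first exact/measurable_EFinP.
  by rewrite -Ip; apply: eq_integral => x _ /=; rewrite ger0_norm.
rewrite /ae_eq => hae; apply: filterS2 hle hae => x hx /(_ I) /= /eqP; rewrite eqe => /eqP px.
apply/eqP; rewrite eq_le hx andbT -subr_le0.
have : k x - k (T x) <= p x by rewrite /p le_max lexx.
by rewrite px.
Qed.

End Int2.

Lemma bsN {R : realType} {d : measure_display} {X : measurableType d}
  (T : X -> X) (g : X -> R) x j :
  birkhoff_sum T (fun y => - g y) x j = - birkhoff_sum T g x j.
Proof. by rewrite /birkhoff_sum sumrN. Qed.

Section Main.
Context {R : realType} {d : measure_display} {X : measurableType d}.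
Variables (mu : probability X R) (T : X -> X) (g : X -> R).

Lemma i_ii : measure_preserving mu T -> cohomologous_to_const mu T g ->
  exists C : R, {ae mu, forall x, forall l : nat, (1 <= l)%N -> Rdev T g x l <= C}.
Proof.
move=> mp [c [h [[mh [M hM]] hg]]]; exists (4 * M).
have A1 := ae_orbit mu T (fun y => g y = c + h (T y) - h y) mp hg.
have A2 := ae_orbit mu T (fun y => `|h y| <= M) mp hM.
apply: filterS2 A1 A2 => x h1 h2 l _.
exact: (cob_Rdev T g x c h M h1 h2 l).
Qed.

Lemma ii_iii :
  (exists C : R, {ae mu, forall x, forall l : nat, (1 <= l)%N -> Rdev T g x l <= C}) ->
  (exists C : R, {ae mu, forall x, exists ln : nat -> nat,
        (forall n, (0 < ln n)%N) /\
        (forall M : nat, exists N : nat, forall n, (N <= n)%N -> (M <= ln n)%N) /\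
        (forall n, Rdev T g x (ln n) <= C)}).
Proof.
move=> [C hC]; exists C; apply: filterS hC => x hx.
exists (fun n => n.+1); split; first by [].
split; last by move=> n; exact: hx.
by move=> M; exists M => n hn; apply: leq_trans hn _.
Qed.

Lemma iii_i : measure_preserving mu T -> ergodic mu T -> Linfty mu g ->
  (exists C : R, {ae mu, forall x, exists ln : nat -> nat,
        (forall n, (0 < ln n)%N) /\
        (forall M : nat, exists N : nat, forall n, (N <= n)%N -> (M <= ln n)%N) /\
        (forall n, Rdev T g x (ln n) <= C)}) ->
  cohomologous_to_const mu T g.
Proof.
move=> mp erg [mg _] [C hC].
have mT := mp.1.
have hA : {ae mu, forall x, exists c, forall j,
    `|birkhoff_sum T g x j - j%:R * c| <= C}.
  by apply: filterS hC => x [ln [h1 [h2 h3]]]; exact: (lin_const T g x C ln h1 h2 h3).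
have [c0 hc0] := erg_const mu T g C mT mg erg hA.
have C0 : 0 <= `|C| by [].
have hup : {ae mu, forall x, forall j, birkhoff_sum T g x j - j%:R * c0 <= `|C|}.
  apply: filterS hc0 => x hx j; have /ler_normlP[_ h] := hx j.
  exact: le_trans h (ler_norm C).
have mgN : measurable_fun setT (fun y => - g y) := measurable_funN mg.
have hlow : {ae mu, forall x, forall j,
    birkhoff_sum T (fun y => - g y) x j - j%:R * (- c0) <= `|C|}.
  apply: filterS hc0 => x hx j; have /ler_normlP[h _] := hx j.
  rewrite bsN; have := ler_norm C; lra.
have [h1 [mh1 b1 ae1]] := supcob mu T g c0 `|C| mT mg C0 hup.
have [h2 [mh2 b2 ae2]] := supcob mu T (fun y => - g y) (- c0) `|C| mT mgN C0 hlow.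
pose k x := h1 x + h2 x.
have mk : measurable_fun setT k := measurable_funD mh1 mh2.
have kb x : 0 <= k x <= `|C| + `|C|.
  have /andP[a1 a2] := b1 x; have /andP[c1 c2] := b2 x.
  by apply/andP; split; rewrite /k; lra.
have hle : {ae mu, forall x, k (T x) <= k x}.
  by apply: filterS2 ae1 ae2 => x e1 e2; rewrite /k; lra.
have heq := shift_inv_eq mu T k _ mp mk kb hle.
exists c0, (fun x => - h1 x); split.
  split; first exact: measurable_funN.
  exists `|C|; apply: aeW => x; have /andP[a1 a2] := b1 x.
  by rewrite normrN ger0_norm.
have ae12 : {ae mu, forall x, (g x - c0 <= h1 x - h1 (T x)) /\
    (- g x - - c0 <= h2 x - h2 (T x))}.
  by apply: filterS2 ae1 ae2 => x e1 e2; split.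
apply: filterS2 heq ae12 => x e [e1 e2]; move: e; rewrite /k => e; lra.
Qed.

End Main.

Theorem mainTheorem2 (R : realType) (d : measure_display) (X : measurableType d)
  (mu : probability X R) (T : X -> X) (g : X -> R) :
  @standard_borel R d X ->
  measure_preserving mu T -> ergodic mu T -> Linfty mu g ->
  (cohomologous_to_const mu T g <->
     exists C : R, {ae mu, forall x, forall l : nat, (1 <= l)%N -> Rdev T g x l <= C})
  /\
  ((exists C : R, {ae mu, forall x, forall l : nat, (1 <= l)%N -> Rdev T g x l <= C}) <->
   (exists C : R, {ae mu, forall x, exists ln : nat -> nat,
        (forall n, (0 < ln n)%N) /\
        (forall M : nat, exists N : nat, forall n, (N <= n)%N -> (M <= ln n)%N) /\
        (forall n, Rdev T g x (ln n) <= C)})).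
Proof.
move=> _ mp erg lg; split; split.
- exact: i_ii.
- by move=> h; apply: iii_i => //; exact: ii_iii.
- exact: ii_iii.
- by move=> h; apply: i_ii => //; exact: iii_i.
Qed.
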